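(* Let $S$ be a finite symmetric generating set of $\mathbb{Z}$ and $(X_n)_{n\ge0}$ the lazy random walk on $\mathrm{Cay}(\mathbb{Z},S)$. Then $$\mathbb{E}[D_{\mathbb{Z}}(X_n)]\xrightarrow[n\to\infty]{}2+\sum_{k\ge2}\frac{1}{[\mathbb{Z}:\Lambda_k]}<\infty.$$
   Context: For $x\ne0$, $D_{\mathbb{Z}}(x)=\min\{[\mathbb{Z}:N]: N \text{ a finite index subgroup of }\mathbb{Z},\ x\notin N\}$, and $D_{\mathbb{Z}}(0)=0$. $\Lambda_k$ ($k\ge2$) is the intersection of all subgroups of $\mathbb{Z}$ of index at most $k$. The lazy random walk starts at $0$ and at each step stays put with probability $1/2$ and otherwise adds a uniformly chosen element of $S$. *)

(* Defs.v *)
From Stdlib Require Import Reals Lra Lia ZArith List ClassicalEpsilon.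
From Coquelicot Require Import Coquelicot.
Open Scope R_scope.

(** Least natural number satisfying [P] (junk value 0 if there is none). *)
Definition least_nat (P : nat -> Prop) : nat :=
  epsilon (inhabits 0%nat) (fun n => P n /\ forall m, P m -> (n <= m)%nat).

(** Subgroups of finite index of Z are exactly the kZ, k >= 1, of index k.
    [in_kZ k x] means x belongs to the subgroup kZ. *)
Definition in_kZ (k : nat) (x : Z) : Prop := Z.divide (Z.of_nat k) x.

(** D_Z(x): least index of a finite-index subgroup not containing x;
    D_Z(0) = 0. *)
Definition DZ (x : Z) : nat :=
  if Z.eq_dec x 0 then 0%nat
  else least_nat (fun k => (1 <= k)%nat /\ ~ in_kZ k x).

(** Lambda_k : intersection of all subgroups of index at most k
    (i.e. of the jZ with 1 <= j <= k), as a predicate on Z. *)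
Definition Lambda (k : nat) (x : Z) : Prop :=
  forall j : nat, (1 <= j <= k)%nat -> in_kZ j x.

(** Index [Z : H] of a nonzero subgroup H of Z: the least positive
    element of H (= number of cosets, since H = nZ). *)
Definition indexZ (H : Z -> Prop) : nat :=
  least_nat (fun n => (1 <= n)%nat /\ H (Z.of_nat n)).

Definition symmetric (S : list Z) : Prop :=
  forall s, In s S -> In (- s)%Z S.

Definition generates_Z (S : list Z) : Prop :=
  forall z : Z, exists c : Z -> Z,
    z = fold_right Z.add 0%Z (map (fun s => (c s * s)%Z) S).

Definition lazy_step (S : list Z) (f : Z -> R) (x : Z) : R :=
  / 2 * f x + / 2 * (/ INR (length S) *
     fold_right Rplus 0 (map (fun s => f (x + s)%Z) S)).

(** [walk_expect S n f x0] = E[f(X_n)] for the lazy walk started at x0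
    (Markov semigroup: E_{x0}[f(X_n)] = (P^n f)(x0)). *)
Fixpoint walk_expect (S : list Z) (n : nat) (f : Z -> R) (x0 : Z) : R :=
  match n with
  | O => f x0
  | Datatypes.S m => walk_expect S m (lazy_step S f) x0
  end.

(* Main.v *)
Require Import Defs.
From Stdlib Require Import Reals Lra Lia ZArith List Classical ClassicalEpsilon FunctionalExtensionality Permutation.
From Coquelicot Require Import Coquelicot.
Open Scope R_scope.

Lemma least_exists (P : nat -> Prop) : (exists n, P n) -> exists n, P n /\ forall m, P m -> (n <= m)%nat.
Proof.
  intros [n Hn]. apply NNPP; intro H.
  assert (H0 : forall k j, (j <= k)%nat -> ~ P j).
  { induction k; intros j Hj HP.
    - apply H. exists j. split; auto. intros m _. lia.
    - apply H. exists j. split; auto. intros m Hm. destruct (le_lt_dec j m); auto.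
      exfalso. apply (IHk m); [lia|auto]. }
  apply (H0 n n); auto.
Qed.

Lemma least_nat_spec (P : nat -> Prop) : (exists n, P n) ->
  P (least_nat P) /\ forall m, P m -> (least_nat P <= m)%nat.
Proof.
  intros H. unfold least_nat. apply epsilon_spec. apply least_exists; auto.
Qed.

Lemma nz_not_div_big (x : Z) : x <> 0%Z -> ~ in_kZ (Z.to_nat (Z.abs x) + 1) x.
Proof.
  intros Hx Hd. unfold in_kZ in Hd. rewrite Nat2Z.inj_add, Z2Nat.id in Hd by lia.
  apply Z.divide_abs_r in Hd. apply Z.divide_pos_le in Hd; lia.
Qed.

Lemma DZ_spec x : x <> 0%Z ->
  (1 <= DZ x)%nat /\ ~ in_kZ (DZ x) x /\ forall k, (1 <= k)%nat -> ~ in_kZ k x -> (DZ x <= k)%nat.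
Proof.
  intros Hx. unfold DZ. destruct (Z.eq_dec x 0); [contradiction|].
  destruct (least_nat_spec (fun k => (1 <= k)%nat /\ ~ in_kZ k x)) as [[H1 H2] H3].
  { exists (Z.to_nat (Z.abs x) + 1)%nat. split; [lia| apply nz_not_div_big; auto]. }
  repeat split; auto.
Qed.

Lemma DZ0 : DZ 0 = 0%nat.
Proof. unfold DZ. destruct (Z.eq_dec 0 0); auto; congruence. Qed.

Lemma Lambda_DZ j x : x <> 0%Z -> (Lambda j x <-> (j < DZ x)%nat).
Proof.
  intros Hx. destruct (DZ_spec x Hx) as [H1 [H2 H3]]. split.
  - intros HL. destruct (le_lt_dec (DZ x) j) as [h|h]; auto. exfalso. apply H2. apply HL. lia.
  - intros Hlt i Hi. apply NNPP. intro Hn. specialize (H3 i (proj1 Hi) Hn). lia.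
Qed.

Lemma DZ_le x : x <> 0%Z -> (DZ x <= Z.to_nat (Z.abs x) + 1)%nat.
Proof. intros Hx. destruct (DZ_spec x Hx) as [_ [_ H3]]. apply H3; [lia|]. apply nz_not_div_big; auto. Qed.

Lemma DZ_ge2 x : x <> 0%Z -> (2 <= DZ x)%nat.
Proof.
  intros Hx. destruct (DZ_spec x Hx) as [H1 [H2 _]].
  destruct (Nat.eq_dec (DZ x) 1) as [e|e]; [|lia].
  exfalso. apply H2. rewrite e. unfold in_kZ. apply Z.divide_1_l.
Qed.

Lemma Lambda_pos j : exists n, (1 <= n)%nat /\ Lambda j (Z.of_nat n).
Proof.
  induction j.
  - exists 1%nat. split; auto. intros i Hi; lia.
  - destruct IHj as [n [Hn HL]]. exists (S j * n)%nat. split; [nia|].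
    intros i Hi. unfold in_kZ. rewrite Nat2Z.inj_mul.
    destruct (Nat.eq_dec i (S j)).
    + subst. apply Z.divide_factor_l.
    + apply Z.divide_mul_r. apply HL. lia.
Qed.

Definition L j := indexZ (Lambda j).

Lemma L_spec j : (1 <= L j)%nat /\ Lambda j (Z.of_nat (L j)) /\
  forall n, (1<=n)%nat -> Lambda j (Z.of_nat n) -> (L j <= n)%nat.
Proof.
  unfold L, indexZ.
  destruct (least_nat_spec (fun n => (1 <= n)%nat /\ Lambda j (Z.of_nat n))) as [[H1 H2] H3].
  { apply Lambda_pos. }
  repeat split; auto.
Qed.

Lemma Lambda_iff j x : Lambda j x <-> in_kZ (L j) x.
Proof.
  destruct (L_spec j) as [H1 [H2 H3]]. split.
  - intros HL. set (l := Z.of_nat (L j)).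
    assert (Hr: Lambda j (x mod l)).
    { intros i Hi. rewrite Z.mod_eq by lia. apply Z.divide_sub_r; [apply HL; auto|].
      apply Z.divide_mul_l. apply H2; auto. }
    destruct (Z.eq_dec (x mod l) 0) as [e|e].
    + unfold in_kZ. apply Z.mod_divide; [lia|]. exact e.
    + exfalso. assert (Hb : (0 <= x mod l < l)%Z) by (apply Z.mod_pos_bound; lia).
      specialize (H3 (Z.to_nat (x mod l))). rewrite Z2Nat.id in H3 by lia.
      assert (L j <= Z.to_nat (x mod l))%nat by (apply H3; [lia|auto]). lia.
  - intros Hd i Hi. unfold in_kZ. eapply Z.divide_trans; [apply H2; auto | exact Hd].
Qed.

Lemma div_prod_coprime a b n : (a | n)%Z -> (b | n)%Z -> Z.gcd a b = 1%Z -> (a * b | n)%Z.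
Proof.
  intros [t Ht] Hb Hg. subst n.
  assert (Hbt : (b | t)%Z).
  { apply Z.gauss with a. rewrite Z.mul_comm. auto. rewrite Z.gcd_comm. auto. }
  destruct Hbt as [u Hu]. subst t. exists u. ring.
Qed.

Lemma L_lower k : (INR (k+1))^3 <= 8 * INR (L (k+2)).
Proof.
  destruct (L_spec (k+2)) as [H1 [H2 H3]].
  assert (Hn : ((k+1)^3 <= 8 * L (k+2))%nat).
  { destruct (le_lt_dec k 1) as [h|h].
    - assert ((k+1)^3 <= 8)%nat by (destruct k as [|[|]]; simpl; lia). lia.
    - assert (exists o, (o <= k+2)%nat /\ (k+1 <= o)%nat /\ exists t, o = (2*t+1)%nat) as [o [Ho1 [Ho2 [t Ht]]]].
      { destruct (Nat.Even_or_Odd (k+2)) as [[t Ht]|[t Ht]].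
        - exists (k+1)%nat. split; [lia|]. split; [lia|]. exists (t-1)%nat. lia.
        - exists (k+2)%nat. split; [lia|]. split; [lia|]. exists t. lia. }
      assert (HL : Lambda (k+2) (Z.of_nat (L (k+2)))) by auto.
      assert (Hd : ((Z.of_nat o * (Z.of_nat o - 1)) * (Z.of_nat o - 2) | Z.of_nat (L (k+2)))%Z).
      { apply div_prod_coprime.
        - apply div_prod_coprime.
          + apply (HL o). lia.
          + replace (Z.of_nat o - 1)%Z with (Z.of_nat (o-1)) by lia. apply (HL (o-1)%nat). lia.
          + apply Z.bezout_1_gcd. exists 1%Z, (-1)%Z. ring.
        - replace (Z.of_nat o - 2)%Z with (Z.of_nat (o-2)) by lia. apply (HL (o-2)%nat). lia.
        - apply Z.bezout_1_gcd. exists (Z.of_nat t), (-(2*Z.of_nat t*Z.of_nat t + 2*Z.of_nat t + 1))%Z.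
          assert (Hot : Z.of_nat o = (2*Z.of_nat t+1)%Z) by lia. rewrite Hot. ring. }
      apply Z.divide_pos_le in Hd; [|lia].
      assert (Z.of_nat ((k+1)^3) <= 8 * Z.of_nat (L (k+2)))%Z.
      { rewrite Nat2Z.inj_pow. set (a := Z.of_nat k) in *. set (O := Z.of_nat o) in *.
        assert (Ha : (2 <= a)%Z) by lia. assert (HO1 : (a + 1 <= O)%Z) by lia.
        assert (E1 : ((a+1)*a*(a-1) <= O*(O-1)*(O-2))%Z).
        { apply Z.mul_le_mono_nonneg; [nia|nia|lia|lia]. }
        assert (E2 : (Z.of_nat (k+1) ^ 3 <= 8 * ((a+1)*a*(a-1)))%Z).
        { replace (Z.of_nat (k+1)) with (a+1)%Z by lia.
          assert (0 <= 7*a*a - 10*a - 1)%Z by nia. nia. }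
        lia. }
      lia. }
  apply le_INR in Hn. rewrite mult_INR, pow_INR in Hn. simpl in Hn. simpl. lra.
Qed.

Fixpoint rs (n : nat) (f : nat -> R) : R :=
  match n with O => 0 | S n' => rs n' f + f n' end.

Definition ind (P : Prop) : R := if excluded_middle_informative P then 1 else 0.

Lemma ind_T (P : Prop) : P -> ind P = 1.
Proof. intros H. unfold ind. destruct (excluded_middle_informative P); tauto. Qed.
Lemma ind_F (P : Prop) : ~ P -> ind P = 0.
Proof. intros H. unfold ind. destruct (excluded_middle_informative P); tauto. Qed.
Lemma ind_01 (P : Prop) : 0 <= ind P <= 1.
Proof. unfold ind. destruct (excluded_middle_informative P); lra. Qed.

Lemma rs_ext n f g : (forall k, (k < n)%nat -> f k = g k) -> rs n f = rs n g.
Proof. induction n; simpl; intros H; auto. rewrite IHn by (intros; apply H; lia). rewrite H by lia. auto. Qed.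

Lemma rs_lt n r : rs n (fun k => ind (k < r)%nat) = INR (Nat.min r n).
Proof.
  induction n; simpl. { rewrite Nat.min_0_r. auto. }
  rewrite IHn. destruct (le_lt_dec r n).
  - rewrite ind_F by lia. rewrite !Nat.min_l by lia. lra.
  - rewrite ind_T by lia. rewrite !Nat.min_r by lia. rewrite S_INR. lra.
Qed.

Lemma D_decomp x K : (Z.to_nat (Z.abs x) <= K)%nat ->
  INR (DZ x) = 2 * ind (x <> 0%Z) + rs K (fun k => ind (x <> 0%Z /\ Lambda (k+2) x)).
Proof.
  intros HK. destruct (Z.eq_dec x 0) as [e|e].
  - subst. rewrite DZ0, ind_F by tauto. rewrite (rs_ext _ _ (fun _ => 0)).
    + clear. simpl. induction K; simpl; lra.
    + intros. apply ind_F. tauto.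
  - rewrite ind_T by auto.
    rewrite (rs_ext _ _ (fun k => ind (k < DZ x - 2)%nat)).
    + rewrite rs_lt. pose proof (DZ_le x e). pose proof (DZ_ge2 x e).
      rewrite Nat.min_l by lia. rewrite minus_INR by lia. simpl. lra.
    + intros k _. pose proof (DZ_ge2 x e). unfold ind.
      destruct (excluded_middle_informative (x <> 0%Z /\ Lambda (k + 2) x)) as [h|h];
      destruct (excluded_middle_informative (k < DZ x - 2)%nat) as [h'|h']; auto.
      * exfalso. apply h'. destruct h as [_ h]. apply (Lambda_DZ _ _ e) in h. lia.
      * exfalso. apply h. split; auto. apply Lambda_DZ; auto. lia.
Qed.

Definition lsum (l : list Z) (f : Z -> R) : R := fold_right Rplus 0 (map f l).

Lemma lsum_lin l a b f g : lsum l (fun s => a * f s + b * g s) = a * lsum l f + b * lsum l g.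
Proof. induction l; unfold lsum in *; simpl; [ring|]. rewrite IHl. ring. Qed.

Lemma lsum_const l c : lsum l (fun _ => c) = INR (length l) * c.
Proof. induction l; unfold lsum in *; simpl; [ring|]. rewrite IHl. destruct (length l); simpl; ring. Qed.

Lemma lsum_le l f g : (forall s, In s l -> f s <= g s) -> lsum l f <= lsum l g.
Proof. induction l; unfold lsum in *; simpl; intros H; [lra|]. 
  apply Rplus_le_compat; [apply H; auto| apply IHl; intros; apply H; auto]. Qed.

Lemma lsum_ext l f g : (forall s, In s l -> f s = g s) -> lsum l f = lsum l g.
Proof. intros H. unfold lsum. f_equal. apply map_ext_in. auto. Qed.

Lemma lsum_nonneg l f : (forall s, In s l -> 0 <= f s) -> 0 <= lsum l f.
Proof. intros H. replace 0 with (lsum l (fun _ => 0)). apply lsum_le; auto.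
  rewrite lsum_const. ring. Qed.

Lemma lsum_in l f s : (forall s, In s l -> 0 <= f s) -> In s l -> f s <= lsum l f.
Proof. induction l; simpl; intros H Hs; [tauto|]. unfold lsum in *; simpl.
  destruct Hs as [<-|Hs].
  - pose proof (lsum_nonneg l f (fun s h => H s (or_intror h))). unfold lsum in H0. lra.
  - pose proof (IHl (fun s h => H s (or_intror h)) Hs). pose proof (H a (or_introl eq_refl)). lra. Qed.

Lemma lazy_eq S f x : lazy_step S f x = /2 * f x + /2 * (/ INR (length S) * lsum S (fun s => f (x+s)%Z)).
Proof. reflexivity. Qed.

Lemma walk_S S n f x0 : walk_expect S (Datatypes.S n) f x0 = walk_expect S n (lazy_step S f) x0.
Proof. reflexivity. Qed.

Lemma walk_ext S n f g x0 : (forall x, f x = g x) -> walk_expect S n f x0 = walk_expect S n g x0.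
Proof. intros H. replace g with f; auto. apply functional_extensionality; auto. Qed.

Lemma walk_lin S n a b f g x0 :
  walk_expect S n (fun x => a * f x + b * g x) x0 = a * walk_expect S n f x0 + b * walk_expect S n g x0.
Proof.
  revert f g. induction n; intros f g; simpl; auto.
  rewrite <- IHn. apply walk_ext. intros x. rewrite !lazy_eq.
  rewrite (lsum_lin S a b (fun s => f (x+s)%Z) (fun s => g (x+s)%Z)). ring.
Qed.

Lemma walk_scal S n a f x0 : walk_expect S n (fun x => a * f x) x0 = a * walk_expect S n f x0.
Proof.
  rewrite (walk_ext S n _ (fun x => a * f x + 0 * f x)) by (intros; ring).
  rewrite walk_lin. ring.
Qed.

Lemma walk_add S n f g x0 : walk_expect S n (fun x => f x + g x) x0 = walk_expect S n f x0 + walk_expect S n g x0.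
Proof.
  rewrite (walk_ext S n _ (fun x => 1 * f x + 1 * g x)) by (intros; ring).
  rewrite walk_lin. ring.
Qed.

Lemma walk_const S n c x0 : S <> nil -> walk_expect S n (fun _ => c) x0 = c.
Proof.
  intros Hne. revert x0. induction n; intros x0; simpl; auto.
  rewrite (walk_ext S n _ (fun _ => c)); auto.
  intros x. rewrite lazy_eq, lsum_const.
  assert (INR (length S) <> 0). { destruct S as [|s0 l0]; [congruence|]. simpl length. rewrite S_INR. pose proof (pos_INR (length l0)). lra. }
  field. auto.
Qed.

Lemma walk_mono S n f g x0 : (forall x, f x <= g x) -> walk_expect S n f x0 <= walk_expect S n g x0.
Proof.
  revert f g. induction n; intros f g H; simpl; auto.
  apply IHn. intros x. rewrite !lazy_eq.
  assert (0 <= / INR (length S)).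
  { destruct (length S). simpl. rewrite Rinv_0. lra. apply Rlt_le, Rinv_0_lt_compat. apply lt_0_INR. lia. }
  pose proof (lsum_le S (fun s => f (x+s)%Z) (fun s => g (x+s)%Z) (fun s _ => H (x+s)%Z)).
  pose proof (H x). nra.
Qed.

Lemma walk_sub S n f g x0 : walk_expect S n (fun x => f x - g x) x0 = walk_expect S n f x0 - walk_expect S n g x0.
Proof.
  rewrite (walk_ext S n _ (fun x => 1 * f x + (-1) * g x)) by (intros; ring).
  rewrite walk_lin. ring.
Qed.

Definition Mz (S : list Z) : Z := fold_right (fun s acc => Z.abs s + acc)%Z 0%Z S.

Lemma Mz_nonneg S : (0 <= Mz S)%Z.
Proof. induction S; simpl; lia. Qed.

Lemma Mz_in S s : In s S -> (Z.abs s <= Mz S)%Z.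
Proof. induction S; simpl; intros H; [tauto|]. pose proof (Mz_nonneg S). destruct H as [<-|H]; [lia|]. apply IHS in H. lia. Qed.

Lemma walk_local S n f g x0 :
  (forall x, (Z.abs (x - x0) <= Z.of_nat n * Mz S)%Z -> f x = g x) ->
  walk_expect S n f x0 = walk_expect S n g x0.
Proof.
  revert f g. induction n; intros f g H; simpl.
  - apply H. lia.
  - apply IHn. intros x Hx. rewrite !lazy_eq.
    pose proof (Mz_nonneg S).
    rewrite H by lia. f_equal. f_equal. f_equal. apply lsum_ext.
    intros s Hs. apply H. pose proof (Mz_in S s Hs). lia.
Qed.

Lemma walk_rs S n K F x0 : S <> nil ->
  walk_expect S n (fun x => rs K (fun k => F k x)) x0 = rs K (fun k => walk_expect S n (F k) x0).
Proof.
  intros Hne. induction K; simpl.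
  - apply walk_const; auto.
  - rewrite walk_add. rewrite IHK. auto.
Qed.

Lemma walk_nonneg S n f x0 : S <> nil -> (forall x, 0 <= f x) -> 0 <= walk_expect S n f x0.
Proof. intros Hne H. rewrite <- (walk_const S n 0 x0 Hne). apply walk_mono; auto. Qed.

Lemma lsum_perm l l' f : Permutation l l' -> lsum l f = lsum l' f.
Proof.
  intros H. induction H; unfold lsum in *; simpl; auto; try lra.
Qed.

Lemma lsum_map_opp l f : lsum (map Z.opp l) f = lsum l (fun s => f (- s)%Z).
Proof. induction l; unfold lsum in *; simpl; auto. rewrite IHl. auto. Qed.

Lemma sin_sum_zero S th : NoDup S -> symmetric S -> lsum S (fun s => sin (th * IZR s)) = 0.
Proof.
  intros Hnd Hsym.
  assert (Hp : Permutation (map Z.opp S) S).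
  { apply Permutation_map_same_l.
    - apply NoDup_map_NoDup_ForallPairs; auto. intros x y _ _ h. lia.
    - intros y Hy. apply in_map_iff in Hy. destruct Hy as [x [<- Hx]]. apply Hsym; auto. }
  pose proof (lsum_perm _ _ (fun s => sin (th * IZR s)) Hp) as E.
  rewrite lsum_map_opp in E.
  rewrite (lsum_ext S _ (fun s => (-1) * sin (th * IZR s) + 0 * 0)) in E.
  - rewrite lsum_lin in E. lra.
  - intros s _. rewrite opp_IZR. replace (th * - IZR s) with (- (th * IZR s)) by ring.
    rewrite sin_neg. ring.
Qed.

Definition phi (S : list Z) (th : R) : R :=
  /2 + /2 * (/ INR (length S) * lsum S (fun s => cos (th * IZR s))).

Lemma lazy_cos S th x : NoDup S -> symmetric S ->
  lazy_step S (fun y => cos (th * IZR y)) x = phi S th * cos (th * IZR x).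
Proof.
  intros Hnd Hsym. rewrite lazy_eq. unfold phi.
  rewrite (lsum_ext S _ (fun s => cos (th * IZR x) * cos (th * IZR s) + (- sin (th * IZR x)) * sin (th * IZR s))).
  - rewrite lsum_lin. rewrite sin_sum_zero by auto. ring.
  - intros s _. rewrite plus_IZR. replace (th * (IZR x + IZR s)) with (th * IZR x + th * IZR s) by ring.
    rewrite cos_plus. ring.
Qed.

Lemma walk_cos S n th x0 : NoDup S -> symmetric S ->
  walk_expect S n (fun y => cos (th * IZR y)) x0 = (phi S th)^n * cos (th * IZR x0).
Proof.
  intros Hnd Hsym. induction n.
  - simpl. ring.
  - rewrite walk_S. rewrite (walk_ext S n _ (fun y => phi S th * cos (th * IZR y))).
    + rewrite walk_scal, IHn. simpl. ring.
    + intros. apply lazy_cos; auto.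
Qed.

Lemma cos_2PI_int z : cos (2 * PI * IZR z) = 1.
Proof.
  destruct (Z_le_gt_dec 0 z).
  - replace z with (Z.of_nat (Z.to_nat z)) by lia. rewrite <- INR_IZR_INZ.
    pose proof (cos_period 0 (Z.to_nat z)). rewrite cos_0 in H. rewrite <- H. f_equal. ring.
  - replace z with (- Z.of_nat (Z.to_nat (-z)))%Z by lia. rewrite opp_IZR, <- INR_IZR_INZ.
    pose proof (cos_period 0 (Z.to_nat (-z))). rewrite cos_0 in H. rewrite <- H.
    rewrite <- cos_neg. f_equal. ring.
Qed.

Lemma sin_2PI_int z y : sin (y + 2 * PI * IZR z) = sin y.
Proof.
  destruct (Z_le_gt_dec 0 z).
  - replace z with (Z.of_nat (Z.to_nat z)) by lia. rewrite <- INR_IZR_INZ.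
    rewrite <- (sin_period y (Z.to_nat z)). f_equal. ring.
  - replace z with (- Z.of_nat (Z.to_nat (-z)))%Z by lia. rewrite opp_IZR, <- INR_IZR_INZ.
    rewrite <- (sin_period (y + 2 * PI * - INR (Z.to_nat (- z))) (Z.to_nat (-z))). f_equal. ring.
Qed.

Lemma telescope_cos th n :
  2 * sin (th/2) * rs n (fun j => cos (INR j * th)) = sin ((INR n - /2) * th) + sin (th/2).
Proof.
  induction n; cbn [rs].
  - rewrite INR_0. replace ((0 - /2) * th) with (- (th/2)) by field. rewrite sin_neg. ring.
  - rewrite Rmult_plus_distr_l, IHn. rewrite S_INR.
    replace ((INR n + 1 - /2) * th) with (INR n * th + th/2) by field.
    replace ((INR n - /2) * th) with (INR n * th - th/2) by field.
    rewrite sin_plus, sin_minus. ring.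
Qed.

Definition freq (j m : nat) : R := 2 * PI * INR j / INR m.

Lemma roots_sum (m : nat) (x : Z) : (1 <= m)%nat ->
  rs m (fun j => cos (freq j m * IZR x)) = INR m * ind (in_kZ m x).
Proof.
  intros Hm. assert (Hm0 : INR m <> 0) by (apply not_0_INR; lia).
  unfold freq.
  rewrite (rs_ext m _ (fun j => cos (INR j * (2 * PI * IZR x / INR m)))).
  2:{ intros k _. f_equal. field. auto. }
  destruct (classic (in_kZ m x)) as [Hd|Hd].
  - rewrite ind_T by auto. destruct Hd as [t Ht]. subst x.
    rewrite (rs_ext m _ (fun _ => 1)).
    + clear. induction m as [|m IHm]; cbn [rs]; [rewrite INR_0; ring|]. rewrite IHm, S_INR. ring.
    + intros k _. rewrite mult_IZR, <- INR_IZR_INZ.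
      replace (INR k * (2 * PI * (IZR t * INR m) / INR m)) with (2 * PI * IZR (Z.of_nat k * t)).
      * apply cos_2PI_int.
      * rewrite mult_IZR, <- INR_IZR_INZ. field. auto.
  - rewrite ind_F by auto.
    set (th := 2 * PI * IZR x / INR m).
    assert (Hs : sin (th / 2) <> 0).
    { intros H. apply sin_eq_0_0 in H. destruct H as [k Hk]. apply Hd.
      exists k. apply eq_IZR. rewrite mult_IZR, <- INR_IZR_INZ.
      unfold th in Hk. pose proof PI_RGT_0.
      assert (IZR x / INR m = IZR k) .
      { apply Rmult_eq_reg_r with PI; [|lra]. rewrite <- Hk. field. auto. }
      rewrite <- H0. field. auto. }
    pose proof (telescope_cos th m) as T.
    replace ((INR m - /2) * th) with (- (th/2) + 2 * PI * IZR x) in T by (unfold th; field; auto).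
    rewrite sin_2PI_int, sin_neg in T.
    replace (- sin (th / 2) + sin (th / 2)) with 0 in T by ring.
    apply Rmult_integral in T. destruct T as [T|T]; [|rewrite T; ring].
    exfalso. apply Hs. lra.
Qed.

Lemma walk_div S n m : NoDup S -> symmetric S -> S <> nil -> (1 <= m)%nat ->
  walk_expect S n (fun x => ind (in_kZ m x)) 0%Z = / INR m * rs m (fun j => (phi S (freq j m))^n).
Proof.
  intros Hnd Hsym Hne Hm. assert (Hm0 : INR m <> 0) by (apply not_0_INR; lia).
  rewrite (walk_ext S n _ (fun x => / INR m * rs m (fun j => cos (freq j m * IZR x)))).
  - rewrite walk_scal. f_equal. rewrite walk_rs by auto. apply rs_ext. intros k _.
    rewrite walk_cos by auto. rewrite Rmult_0_r, cos_0. ring.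
  - intros x. rewrite roots_sum by auto. field. auto.
Qed.

Lemma len_pos (S : list Z) : S <> nil -> 0 < INR (length S).
Proof. intros H. destruct S; [congruence|]. apply lt_0_INR. simpl; lia. Qed.

Lemma phi_one_minus S u : S <> nil ->
  1 - phi S (2 * u) = / INR (length S) * lsum S (fun s => (sin (u * IZR s))^2).
Proof.
  intros Hne. pose proof (len_pos S Hne). unfold phi.
  rewrite (lsum_ext S _ (fun s => 1 * 1 + (-2) * (sin (u * IZR s))^2)).
  - rewrite lsum_lin. rewrite (lsum_const S 1). field. lra.
  - intros s _. replace (2 * u * IZR s) with (2 * (u * IZR s)) by ring. rewrite cos_2a_sin. ring.
Qed.

Lemma phi_bounds S th : S <> nil -> 0 <= phi S th <= 1.
Proof.
  intros Hne. pose proof (len_pos S Hne). unfold phi.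
  pose proof (lsum_le S (fun s => cos (th * IZR s)) (fun _ => 1) (fun s _ => proj2 (COS_bound _))).
  pose proof (lsum_le S (fun _ => -1) (fun s => cos (th * IZR s)) (fun s _ => proj1 (COS_bound _))).
  rewrite lsum_const in H0, H1.
  assert (/ INR (length S) * INR (length S) = 1) by (field; lra).
  assert (0 < / INR (length S)) by (apply Rinv_0_lt_compat; lra).
  split; nra.
Qed.

Lemma sin_add_abs a b : Rabs (sin (a + b)) <= Rabs (sin a) + Rabs (sin b).
Proof.
  rewrite sin_plus. pose proof (COS_bound a). pose proof (COS_bound b).
  eapply Rle_trans; [apply Rabs_triang|]. rewrite !Rabs_mult.
  assert (Rabs (cos b) <= 1) by (apply Rabs_le; lra).
  assert (Rabs (cos a) <= 1) by (apply Rabs_le; lra).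
  pose proof (Rabs_pos (sin a)). pose proof (Rabs_pos (sin b)). nra.
Qed.

Lemma sin_nat_mul k y : Rabs (sin (INR k * y)) <= INR k * Rabs (sin y).
Proof.
  induction k.
  - simpl. rewrite Rmult_0_l, sin_0, Rabs_R0. lra.
  - rewrite S_INR. replace ((INR k + 1) * y) with (INR k * y + y) by ring.
    eapply Rle_trans; [apply sin_add_abs|]. lra.
Qed.

Lemma sin_int_mul k y : Rabs (sin (IZR k * y)) <= Rabs (IZR k) * Rabs (sin y).
Proof.
  destruct (Z_le_gt_dec 0 k).
  - replace k with (Z.of_nat (Z.to_nat k)) by lia. rewrite <- INR_IZR_INZ.
    rewrite (Rabs_pos_eq (INR (Z.to_nat k))) by apply pos_INR. apply sin_nat_mul.
  - replace k with (- Z.of_nat (Z.to_nat (-k)))%Z by lia. rewrite opp_IZR, <- INR_IZR_INZ.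
    rewrite Rabs_Ropp, (Rabs_pos_eq (INR (Z.to_nat (-k)))) by apply pos_INR.
    replace (- INR (Z.to_nat (- k)) * y) with (- (INR (Z.to_nat (- k)) * y)) by ring.
    rewrite sin_neg, Rabs_Ropp. apply sin_nat_mul.
Qed.

Lemma sin_bezout (l : list Z) (c : Z -> Z) u :
  Rabs (sin (IZR (fold_right Z.add 0%Z (map (fun s => (c s * s)%Z) l)) * u)) <=
  lsum l (fun s => Rabs (IZR (c s)) * Rabs (sin (u * IZR s))).
Proof.
  induction l; unfold lsum in *; simpl.
  - rewrite Rmult_0_l, sin_0, Rabs_R0. lra.
  - rewrite plus_IZR, Rmult_plus_distr_r. eapply Rle_trans; [apply sin_add_abs|].
    apply Rplus_le_compat; auto.
    rewrite mult_IZR. replace (IZR (c a) * IZR a * u) with (IZR (c a) * (u * IZR a)) by ring.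
    apply sin_int_mul.
Qed.

Lemma phi_quant S : S <> nil -> generates_Z S ->
  exists C, 0 < C /\ forall u, (sin u)^2 <= C * (1 - phi S (2 * u)).
Proof.
  intros Hne Hgen. destruct (Hgen 1%Z) as [c Hc].
  set (A := lsum S (fun s => Rabs (IZR (c s)))).
  pose proof (len_pos S Hne) as Hn.
  exists (A^2 * INR (length S) + 1). split.
  { pose proof (pow2_ge_0 A). nra. }
  intros u. rewrite phi_one_minus by auto.
  set (T := lsum S (fun s => sin (u * IZR s) ^ 2)).
  assert (HT : 0 <= T) by (apply lsum_nonneg; intros; apply pow2_ge_0).
  assert (HA : 0 <= A) by (apply lsum_nonneg; intros; apply Rabs_pos).
  assert (H1 : Rabs (sin u) <= A * sqrt T).
  { pose proof (sin_bezout S c u) as B. rewrite <- Hc in B. rewrite Rmult_1_l in B.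
    eapply Rle_trans; [exact B|].
    replace (A * sqrt T) with (lsum S (fun s => sqrt T * Rabs (IZR (c s)) + 0 * 0)) by (rewrite lsum_lin; unfold A; ring).
    apply lsum_le. intros s Hs. rewrite Rmult_0_l, Rplus_0_r, (Rmult_comm (sqrt T)).
    apply Rmult_le_compat_l; [apply Rabs_pos|].
    rewrite <- sqrt_Rsqr_abs. apply sqrt_le_1_alt.
    assert (Hq : sin (u * IZR s) ^ 2 <= T).
    { apply (lsum_in S (fun s => sin (u * IZR s) ^ 2)); auto. intros; apply pow2_ge_0. }
    unfold Rsqr. simpl in Hq. lra. }
  assert (H2 : (sin u)^2 <= A^2 * T).
  { replace ((sin u)^2) with (Rsqr (Rabs (sin u))) by (rewrite <- Rsqr_abs; unfold Rsqr; ring).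
    replace (A^2 * T) with (Rsqr (A * sqrt T)).
    - apply Rsqr_incr_1; auto. apply Rabs_pos. apply Rmult_le_pos; auto. apply sqrt_pos.
    - unfold Rsqr. replace (A * sqrt T * (A * sqrt T)) with (A * A * (sqrt T * sqrt T)) by ring.
      rewrite sqrt_sqrt; auto. ring. }
  assert (Hinv : INR (length S) * / INR (length S) = 1) by (field; lra).
  assert (0 <= / INR (length S) * T) by (apply Rmult_le_pos; auto; left; apply Rinv_0_lt_compat; lra).
  replace ((A ^ 2 * INR (length S) + 1) * (/ INR (length S) * T)) with
     (A^2 * T * (INR (length S) * / INR (length S)) + / INR (length S) * T) by ring.
  rewrite Hinv. lra.
Qed.

Lemma sin_approx1 y : sin_approx y 1 = y - y^3/6.
Proof. unfold sin_approx, sin_term. simpl. field. Qed.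

Lemma sin_lower (m j : nat) : (1 <= j)%nat -> (j < m)%nat ->
  INR (Nat.min j (m - j)) / INR m <= sin (PI * INR j / INR m).
Proof.
  intros Hj Hjm. set (i := Nat.min j (m - j)).
  assert (Hm : 0 < INR m) by (apply lt_0_INR; lia).
  assert (Hi1 : (1 <= i)%nat) by (unfold i; lia).
  assert (Hi2 : (2 * i <= m)%nat) by (unfold i; lia).
  apply le_INR in Hi1, Hi2. rewrite mult_INR in Hi2. simpl INR in Hi1, Hi2.
  pose proof PI2_3_2. pose proof PI_4.
  set (y := PI * INR i / INR m).
  assert (Hy0 : 0 < y) by (unfold y; apply Rdiv_lt_0_compat; [nra|lra]).
  assert (Hy1 : y <= PI / 2).
  { unfold y. apply Rmult_le_reg_r with (INR m); auto. field_simplify; [|lra]. nra. }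
  assert (Hsy : sin (PI * INR j / INR m) = sin y).
  { unfold y, i. destruct (Nat.min_spec j (m - j)) as [[_ ->]|[_ ->]]; auto.
    rewrite minus_INR by lia. rewrite <- sin_PI_x. f_equal. field. lra. }
  rewrite Hsy.
  pose proof (sin_bound y 0 (Rlt_le _ _ Hy0) ltac:(lra)) as [Hb _].
  simpl (2 * 0 + 1)%nat in Hb. rewrite sin_approx1 in Hb.
  assert (INR i / INR m = y / PI) by (unfold y; field; lra).
  rewrite H1.
  assert (y^2 <= 4) by nra.
  assert (/ PI <= /3) by (apply Rinv_le_contravar; lra).
  assert (y / PI <= y / 3) by (unfold Rdiv; apply Rmult_le_compat_l; lra).
  nra.
Qed.

Lemma pow_le_one_gen a n : 0 <= a <= 1 -> a ^ n <= 1.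
Proof. intros H. induction n; simpl; [lra|]. pose proof (pow_le a n (proj1 H)). nra. Qed.

Lemma bernoulli x n : 0 <= x -> 1 + INR n * x <= (1 + x) ^ n.
Proof.
  intros Hx. induction n; [simpl; lra|]. rewrite S_INR. cbn [pow].
  pose proof (pos_INR n). nra.
Qed.

Lemma pow_one_minus x n : 0 <= x <= 1 -> (1 - x) ^ n * (1 + INR n * x) <= 1.
Proof.
  intros Hx. pose proof (bernoulli x n (proj1 Hx)).
  pose proof (pow_le (1 - x) n ltac:(lra)).
  eapply Rle_trans; [apply Rmult_le_compat_l; eauto|].
  rewrite <- Rpow_mult_distr. apply pow_le_one_gen. nra.
Qed.

Definition hh (B : R) (i : nat) : R := Rmin 1 (B / INR i ^ 2).

Lemma Rinv_nonneg x : 0 <= x -> 0 <= / x.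
Proof. intros H. destruct (Req_dec x 0) as [e|e]; [rewrite e, Rinv_0; lra|]. left; apply Rinv_0_lt_compat; lra. Qed.

Lemma hh_nonneg B i : 0 <= B -> 0 <= hh B i.
Proof. intros HB. unfold hh. apply Rmin_glb; [lra|]. apply Rmult_le_pos; auto.
  apply Rinv_nonneg. apply pow2_ge_0. Qed.

Lemma hh_le1 B i : hh B i <= 1.
Proof. unfold hh. apply Rmin_l. Qed.

Lemma hh_le2 B i : hh B i <= B / INR i ^ 2.
Proof. unfold hh. apply Rmin_r. Qed.

Lemma hh_min B a b : 0 <= B -> hh B (Nat.min a b) <= hh B a + hh B b.
Proof.
  intros HB. pose proof (hh_nonneg B a HB). pose proof (hh_nonneg B b HB).
  destruct (Nat.min_spec a b) as [[_ ->]|[_ ->]]; lra.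
Qed.

Lemma phi_pow_bound S C n m j : S <> nil -> 0 < C ->
  (forall u, (sin u)^2 <= C * (1 - phi S (2 * u))) -> (1 <= n)%nat -> (1 <= j)%nat -> (j < m)%nat ->
  (phi S (freq j m))^n <= hh (C * INR m ^ 2 / INR n) (Nat.min j (m - j)).
Proof.
  intros Hne HC Hq Hn Hj Hjm.
  set (i := Nat.min j (m - j)).
  set (u := PI * INR j / INR m).
  assert (Hm : 0 < INR m) by (apply lt_0_INR; lia).
  assert (Hn' : 1 <= INR n) by (apply (le_INR 1); lia).
  assert (Hi : 1 <= INR i) by (apply (le_INR 1); unfold i; lia).
  assert (Hf : freq j m = 2 * u) by (unfold freq, u; field; lra).
  rewrite Hf.
  pose proof (phi_bounds S (2 * u) Hne) as [P0 P1].
  pose proof (Hq u) as Hqu.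
  pose proof (sin_lower m j Hj Hjm) as Hsl. fold i u in Hsl.
  set (x := sin u ^ 2 / C).
  assert (Hx0 : 0 <= x) by (unfold x; apply Rmult_le_pos; [apply pow2_ge_0| left; apply Rinv_0_lt_compat; auto]).
  assert (Hx1 : x <= 1 - phi S (2 * u)).
  { unfold x. apply Rmult_le_reg_r with C; auto. field_simplify; lra. }
  assert (Hpow : phi S (2 * u) ^ n <= (1 - x) ^ n) by (apply pow_incr; lra).
  eapply Rle_trans; [exact Hpow|].
  unfold hh. apply Rmin_glb.
  - apply pow_le_one_gen. lra.
  - pose proof (pow_one_minus x n ltac:(lra)) as Hb.
    set (P := (1 - x) ^ n) in *.
    assert (HP : 0 <= P) by (apply pow_le; lra).
    set (w := INR n * INR i ^ 2 / (C * INR m ^ 2)).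
    assert (Hw : 0 < w).
    { unfold w. apply Rdiv_lt_0_compat. apply Rmult_lt_0_compat; [lra| nra]. apply Rmult_lt_0_compat; [lra|nra]. }
    assert (Hwx : w <= INR n * x).
    { unfold w, x. unfold Rdiv. rewrite Rinv_mult. 
      assert (INR i / INR m <= sin u) by exact Hsl.
      assert ((INR i / INR m) ^ 2 <= sin u ^ 2).
      { apply pow_incr. split; auto. apply Rdiv_le_0_compat; lra. }
      replace (INR n * INR i ^ 2 * (/ C * / INR m ^ 2)) with (INR n * (INR i / INR m)^2 * / C) by (field; lra).
      replace (INR n * (sin u ^ 2 * / C)) with (INR n * sin u ^ 2 * / C) by ring.
      apply Rmult_le_compat_r; [left; apply Rinv_0_lt_compat; auto|].
      apply Rmult_le_compat_l; lra. }
    assert (HPw : P * w <= 1) by nra.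
    replace (C * INR m ^ 2 / INR n / INR i ^ 2) with (/ w) by (unfold w; field; repeat split; nra).
    apply Rmult_le_reg_r with w; auto. rewrite Rinv_l; lra.
Qed.

Lemma rs_shift n f : rs (Datatypes.S n) f = f 0%nat + rs n (fun j => f (Datatypes.S j)).
Proof. induction n; cbn [rs] in *; [ring|]. rewrite IHn. cbn [rs]. ring. Qed.

Lemma rs_le n f g : (forall k, (k < n)%nat -> f k <= g k) -> rs n f <= rs n g.
Proof. induction n; cbn [rs]; intros H; [lra|]. apply Rplus_le_compat; [apply IHn; intros; apply H; lia| apply H; lia]. Qed.

Lemma rs_add n f g : rs n (fun k => f k + g k) = rs n f + rs n g.
Proof. induction n; cbn [rs]; [ring|]. rewrite IHn. ring. Qed.

Lemma rs_scal n c f : rs n (fun k => c * f k) = c * rs n f.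
Proof. induction n; cbn [rs]; [ring|]. rewrite IHn. ring. Qed.

Lemma rs_sub n f g : rs n (fun k => f k - g k) = rs n f - rs n g.
Proof. induction n; cbn [rs]; [ring|]. rewrite IHn. ring. Qed.

Lemma rs_nonneg n f : (forall k, (k < n)%nat -> 0 <= f k) -> 0 <= rs n f.
Proof. induction n; cbn [rs]; intros H; [lra|]. pose proof (H n ltac:(lia)). pose proof (IHn ltac:(intros; apply H; lia)). lra. Qed.

Lemma rs_rev n f : rs n (fun j => f (n - 1 - j)%nat) = rs n f.
Proof.
  induction n; auto. rewrite rs_shift. cbn [rs].
  rewrite (rs_ext n _ (fun j => f (n - 1 - j)%nat)) by (intros; f_equal; lia).
  rewrite IHn. replace (Datatypes.S n - 1 - 0)%nat with n by lia. ring.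
Qed.

Lemma hh_sum_aux B I K : 0 <= B -> (1 <= I)%nat ->
  rs K (fun j => hh B (Datatypes.S j)) <= INR (Nat.min K I) + B * (/ INR I - / INR (Nat.max K I)).
Proof.
  intros HB HI. induction K.
  - cbn [rs]. rewrite Nat.min_0_l, Nat.max_0_l. simpl. lra.
  - cbn [rs]. destruct (le_lt_dec I K) as [h|h].
    + rewrite (Nat.min_r K I) in IHK by lia. rewrite (Nat.max_l K I) in IHK by lia.
      rewrite Nat.min_r by lia. rewrite Nat.max_l by lia.
      assert (HK : 1 <= INR K) by (apply (le_INR 1); lia).
      pose proof (hh_le2 B (Datatypes.S K)). rewrite S_INR in *.
      assert (B / (INR K + 1) ^ 2 <= B * (/ INR K - / (INR K + 1))).
      { replace (/ INR K - / (INR K + 1)) with (/ (INR K * (INR K + 1))) by (field; lra).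
        unfold Rdiv. apply Rmult_le_compat_l; auto. apply Rinv_le_contravar; nra. }
      lra.
    + rewrite (Nat.min_l K I) in IHK by lia. rewrite (Nat.max_r K I) in IHK by lia.
      rewrite Nat.min_l by lia. rewrite Nat.max_r by lia.
      pose proof (hh_le1 B (Datatypes.S K)). rewrite S_INR. lra.
Qed.

Lemma hh_sum B I K : 0 <= B -> (1 <= I)%nat ->
  rs K (fun j => hh B (Datatypes.S j)) <= INR I + B / INR I.
Proof.
  intros HB HI. eapply Rle_trans; [apply hh_sum_aux; eauto|].
  assert (INR (Nat.min K I) <= INR I) by (apply le_INR; lia).
  assert (0 < INR (Nat.max K I)) by (apply lt_0_INR; lia).
  assert (0 < / INR (Nat.max K I)) by (apply Rinv_0_lt_compat; auto).
  unfold Rdiv. nra.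
Qed.

Lemma rs_phi_bound S C n m I : S <> nil -> 0 < C ->
  (forall u, (sin u)^2 <= C * (1 - phi S (2 * u))) -> (1 <= n)%nat -> (1 <= m)%nat -> (1 <= I)%nat ->
  rs m (fun j => phi S (freq j m) ^ n) <= 1 + 2 * (INR I + (C * INR m ^ 2 / INR n) / INR I).
Proof.
  intros Hne HC Hq Hn Hm HI.
  set (B := C * INR m ^ 2 / INR n).
  assert (HB : 0 <= B).
  { unfold B. apply Rmult_le_pos; [apply Rmult_le_pos; [lra|apply pow2_ge_0]|]. apply Rinv_nonneg, pos_INR. }
  destruct m as [|m']; [lia|]. rewrite rs_shift.
  assert (H0 : phi S (freq 0 (Datatypes.S m')) ^ n <= 1) by (apply pow_le_one_gen; apply phi_bounds; auto).
  assert (H1 : rs m' (fun j => phi S (freq (Datatypes.S j) (Datatypes.S m')) ^ n) <=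
               rs m' (fun j => hh B (Datatypes.S j)) + rs m' (fun j => hh B (Datatypes.S (m' - 1 - j)))).
  { rewrite <- rs_add. apply rs_le. intros k Hk.
    eapply Rle_trans; [apply phi_pow_bound; eauto; lia|]. fold B.
    eapply Rle_trans; [apply hh_min; auto|]. 
    replace (Datatypes.S m' - Datatypes.S k)%nat with (Datatypes.S (m' - 1 - k)) by lia. lra. }
  rewrite (rs_rev m' (fun j => hh B (Datatypes.S j))) in H1.
  pose proof (hh_sum B I m' HB HI). lra.
Qed.

Lemma nat_sqrt_bounds m : (1 <= m)%nat ->
  sqrt (INR m) <= INR (Datatypes.S (Nat.sqrt m)) <= 2 * sqrt (INR m) /\ 1 <= sqrt (INR m).
Proof.
  intros Hm. pose proof (Nat.sqrt_spec' m) as [H1 H2].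
  apply le_INR in H1. apply lt_INR in H2. rewrite !mult_INR in H1, H2.
  set (s := Nat.sqrt m) in *. pose proof (pos_INR s).
  assert (Hm1 : 1 <= INR m) by (apply (le_INR 1); auto).
  assert (Hr1 : 1 <= sqrt (INR m)) by (rewrite <- sqrt_1; apply sqrt_le_1_alt; auto).
  assert (Hs1 : INR s <= sqrt (INR m)).
  { rewrite <- (sqrt_square (INR s)) by auto. apply sqrt_le_1_alt. auto. }
  assert (Hs2 : sqrt (INR m) < INR (Datatypes.S s)).
  { rewrite <- (sqrt_square (INR (Datatypes.S s))) by apply pos_INR. apply sqrt_lt_1_alt. split; [lra|]. auto. }
  rewrite S_INR in *. repeat split; lra.
Qed.

Lemma q_bound S : NoDup S -> symmetric S -> S <> nil -> generates_Z S ->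
  exists K0, 1 <= K0 /\ forall n m, (1 <= m)%nat -> INR m <= INR n * IZR (Mz S) ->
    walk_expect S n (fun x => ind (in_kZ m x)) 0%Z <= K0 / sqrt (INR m).
Proof.
  intros Hnd Hsym Hne Hgen.
  destruct (phi_quant S Hne Hgen) as [C [HC Hq]].
  pose proof (Mz_nonneg S) as HM. apply IZR_le in HM. set (M := IZR (Mz S)) in *.
  exists (5 + 2 * C * M). split; [pose proof (Rmult_le_pos _ _ (Rlt_le _ _ HC) HM); lra|].
  intros n m Hm Hmn.
  assert (Hm1 : 1 <= INR m) by (apply (le_INR 1); auto).
  assert (Hn : (1 <= n)%nat).
  { destruct n; [simpl in Hmn; lra|lia]. }
  assert (Hn1 : 1 <= INR n) by (apply (le_INR 1); auto).
  rewrite walk_div by auto.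
  set (I := Datatypes.S (Nat.sqrt m)).
  pose proof (rs_phi_bound S C n m I Hne HC Hq Hn Hm ltac:(unfold I; lia)) as Hb.
  destruct (nat_sqrt_bounds m Hm) as [[HI1 HI2] Hr1]. fold I in HI1, HI2.
  set (r := sqrt (INR m)) in *.
  assert (Hrr : r * r = INR m) by (apply sqrt_sqrt; lra).
  set (B := C * INR m ^ 2 / INR n) in *.
  assert (HB1 : B <= C * INR m * M).
  { unfold B. unfold Rdiv. replace (C * INR m ^ 2 * / INR n) with ((C * INR m) * (INR m / INR n)) by (field; lra).
    apply Rmult_le_compat_l; [nra|].
    replace M with ((INR n * M) / INR n) by (field; lra).
    unfold Rdiv. apply Rmult_le_compat_r; auto. apply Rinv_nonneg; lra. }
  assert (HB0 : 0 <= B).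
  { unfold B. apply Rmult_le_pos; [apply Rmult_le_pos; [lra|apply pow2_ge_0]|]. apply Rinv_nonneg, pos_INR. }
  assert (HBI : B / INR I <= C * M * r).
  { apply Rmult_le_reg_r with (INR I); [lra|]. unfold Rdiv. rewrite Rmult_assoc, Rinv_l by lra.
    rewrite <- Hrr in HB1. nra. }
  assert (Hsum : 1 + 2 * (INR I + B / INR I) <= (5 + 2 * C * M) * r) by nra.
  assert (Hpos : 0 <= rs m (fun j => phi S (freq j m) ^ n)).
  { apply rs_nonneg. intros. apply pow_le. apply phi_bounds; auto. }
  apply Rmult_le_reg_l with (INR m); [lra|].
  rewrite <- Rmult_assoc, Rinv_r by lra. rewrite Rmult_1_l.
  rewrite <- Hrr. unfold Rdiv. replace (r * r * ((5 + 2 * C * M) * / r)) with ((5 + 2 * C * M) * r) by (field; lra).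
  lra.
Qed.

Lemma phi_zero S m : S <> nil -> phi S (freq 0 m) = 1.
Proof.
  intros Hne. pose proof (len_pos S Hne). unfold phi, freq. rewrite INR_0.
  rewrite (lsum_ext S _ (fun _ => 1)).
  - rewrite lsum_const. field. lra.
  - intros. replace (2 * PI * 0 / INR m * IZR s) with 0 by (unfold Rdiv; ring). apply cos_0.
Qed.

Lemma rs_lim K (F : nat -> nat -> R) (l : nat -> R) :
  (forall k, (k < K)%nat -> is_lim_seq (F k) (l k)) -> is_lim_seq (fun n => rs K (fun k => F k n)) (rs K l).
Proof.
  induction K; intros H; cbn [rs].
  - apply is_lim_seq_const.
  - apply is_lim_seq_plus'; [apply IHK; intros; apply H; lia| apply H; lia].
Qed.

Lemma q_lim S m : NoDup S -> symmetric S -> S <> nil -> generates_Z S -> (1 <= m)%nat ->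
  is_lim_seq (fun n => walk_expect S n (fun x => ind (in_kZ m x)) 0%Z) (/ INR m).
Proof.
  intros Hnd Hsym Hne Hgen Hm.
  destruct (phi_quant S Hne Hgen) as [C [HC Hq]].
  apply is_lim_seq_ext with (fun n => / INR m * (1 + rs (m - 1) (fun k => phi S (freq (Datatypes.S k) m) ^ n))).
  { intros n. rewrite walk_div by auto. f_equal. destruct m as [|m']; [lia|].
    rewrite rs_shift, phi_zero, pow1 by auto. replace (Datatypes.S m' - 1)%nat with m' by lia. auto. }
  assert (E : Rbar_mult (/ INR m) (Finite (1 + rs (m - 1) (fun _ => 0))) = Finite (/ INR m)).
  { simpl. rewrite (rs_ext _ _ (fun k => 0 * 0)) by (intros; ring). rewrite rs_scal. f_equal. ring. }
  rewrite <- E.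
  apply (is_lim_seq_scal_l _ (/ INR m) (Finite (1 + rs (m - 1) (fun _ => 0)))).
  apply (is_lim_seq_plus' (fun _ => 1)). apply is_lim_seq_const.
  apply rs_lim. intros k Hk. apply is_lim_seq_geom.
  set (u := PI * INR (Datatypes.S k) / INR m).
  assert (Hm0 : 0 < INR m) by (apply lt_0_INR; lia).
  assert (Hf : freq (Datatypes.S k) m = 2 * u) by (unfold freq, u; field; lra).
  rewrite Hf. pose proof (phi_bounds S (2 * u) Hne). pose proof (Hq u).
  pose proof (sin_lower m (Datatypes.S k) ltac:(lia) ltac:(lia)). fold u in H1.
  assert (0 < INR (Nat.min (Datatypes.S k) (m - Datatypes.S k)) / INR m).
  { apply Rdiv_lt_0_compat; auto. apply lt_0_INR. lia. }
  assert (0 < sin u ^ 2) by nra.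
  rewrite Rabs_pos_eq by lra. nra.
Qed.

Lemma p0_lim S : NoDup S -> symmetric S -> S <> nil -> generates_Z S ->
  is_lim_seq (fun n => walk_expect S n (fun x => ind (x = 0%Z)) 0%Z) 0.
Proof.
  intros Hnd Hsym Hne Hgen. apply is_lim_seq_spec. intros eps.
  destruct (archimed_cor1 (eps / 2)) as [m [Hm1 Hm2]]. { destruct eps; simpl; lra. }
  pose proof (q_lim S m Hnd Hsym Hne Hgen Hm2) as Hq.
  apply is_lim_seq_spec in Hq. destruct (Hq (mkposreal (eps/2) ltac:(destruct eps; simpl; lra))) as [N HN].
  exists N. intros n Hn. specialize (HN n Hn). simpl in HN.
  assert (H0 : 0 <= walk_expect S n (fun x => ind (x = 0%Z)) 0%Z) by (apply walk_nonneg; auto; intros; apply ind_01).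
  assert (H1 : walk_expect S n (fun x => ind (x = 0%Z)) 0%Z <= walk_expect S n (fun x => ind (in_kZ m x)) 0%Z).
  { apply walk_mono. intros x. destruct (Z.eq_dec x 0) as [->|e].
    - rewrite !ind_T; auto. lra. apply Z.divide_0_r.
    - rewrite ind_F by auto. apply ind_01. }
  rewrite Rminus_0_r, Rabs_pos_eq by auto.
  apply Rabs_lt_between in HN. lra.
Qed.

Lemma is_series_lim (a : nat -> R) l : is_series a l <-> is_lim_seq (sum_n a) l.
Proof. split; intro H; exact H. Qed.

Lemma rs_sumf N f : rs (Datatypes.S N) f = sum_f_R0 f N.
Proof. induction N; cbn [rs] in *; simpl; [ring|]. rewrite <- IHN. cbn [rs]. ring. Qed.

Lemma rs_sumn N (f : nat -> R) : rs (Datatypes.S N) f = sum_n f N.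
Proof. rewrite sum_n_Reals. apply rs_sumf. Qed.

Lemma ex_series_bounded (f : nat -> R) B : (forall k, 0 <= f k) -> (forall N, rs N f <= B) -> ex_series f.
Proof.
  intros H0 HB.
  destruct (ex_finite_lim_seq_incr (sum_n f) B) as [l Hl].
  - intros n. rewrite <- !rs_sumn. cbn [rs]. pose proof (H0 (Datatypes.S n)). cbn [rs] in *. lra.
  - intros n. rewrite <- rs_sumn. apply HB.
  - exists l. apply is_series_lim. auto.
Qed.

Lemma Series_zero : Series (fun _ => 0) = 0.
Proof.
  apply is_series_unique. apply is_series_lim.
  apply is_lim_seq_ext with (fun _ => 0); [|apply is_lim_seq_const].
  intros n. rewrite <- rs_sumn. clear. induction (Datatypes.S n); cbn [rs]; lra.
Qed.

Lemma Series_nonneg f : (forall k, 0 <= f k) -> ex_series f -> 0 <= Series f.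
Proof. intros H He. rewrite <- Series_zero. apply Series_le; auto. intros; split; [lra|auto]. Qed.

Lemma Series_tail f K : ex_series f -> Series f - rs K f = Series (fun k => f (K + k)%nat).
Proof.
  intros He. destruct K.
  - cbn [rs]. rewrite Rminus_0_r. apply Series_ext. intros; auto.
  - rewrite (Series_incr_n f (Datatypes.S K)) by (auto; lia). simpl pred. rewrite rs_sumf. ring.
Qed.

Lemma rs_le_Series f N : (forall k, 0 <= f k) -> ex_series f -> rs N f <= Series f.
Proof.
  intros H He. pose proof (Series_tail f N He).
  assert (0 <= Series (fun k => f (N + k)%nat)).
  { apply Series_nonneg; auto. apply (proj1 (ex_series_incr_n f N)); auto. }
  lra.
Qed.

Lemma rs_split K d f : rs (K + d) f = rs K f + rs d (fun j => f (K + j)%nat).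
Proof. induction d; cbn [rs]. rewrite Nat.add_0_r. ring. rewrite Nat.add_succ_r. cbn [rs]. rewrite IHd. ring. Qed.

Lemma tannery (t : nat -> nat -> R) (a g : nat -> R) (T : nat -> R) (Kn : nat -> nat) :
  (forall k n, 0 <= t k n <= g k) -> (forall k, 0 <= a k <= g k) -> ex_series g ->
  (forall k, is_lim_seq (fun n => t k n) (a k)) ->
  (forall n K, (Kn n <= K)%nat -> T n = rs K (fun k => t k n)) -> is_lim_seq T (Series a).
Proof.
  intros Ht Ha Hg Hl HT.
  assert (Hae : ex_series a).
  { apply (ex_series_le a g); auto. intros k. rewrite <- Rabs_Rabsolu; apply Rabs_le.
    pose proof (Ha k). rewrite Rabs_pos_eq; lra. }
  apply is_lim_seq_spec. intros eps.
  set (e3 := eps / 3). assert (He3 : 0 < e3) by (unfold e3; destruct eps; simpl; lra).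
  pose proof (Series_correct g Hg) as Hgs. apply is_series_lim, is_lim_seq_spec in Hgs.
  destruct (Hgs (mkposreal e3 He3)) as [N0 HN0]. specialize (HN0 N0 (le_n _)). simpl in HN0.
  set (K := Datatypes.S N0). rewrite <- rs_sumn in HN0. fold K in HN0.
  assert (Hgt : Series g - rs K g < e3).
  { apply Rabs_lt_between in HN0. lra. }
  assert (Hat : 0 <= Series a - rs K a <= Series g - rs K g).
  { rewrite !Series_tail by auto. split.
    - apply Series_nonneg. intros; apply Ha. apply ex_series_incr_n; auto.
    - apply Series_le. intros; apply Ha. apply ex_series_incr_n; auto. }
  pose proof (rs_lim K t a (fun k _ => Hl k)) as Hf. apply is_lim_seq_spec in Hf.
  destruct (Hf (mkposreal e3 He3)) as [N1 HN1].
  exists N1. intros n Hn. specialize (HN1 n Hn). simpl in HN1.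
  rewrite (HT n (K + Kn n)%nat) by lia. rewrite rs_split.
  set (R0 := rs (Kn n) (fun j => t (K + j)%nat n)).
  assert (HR : 0 <= R0 <= Series g - rs K g).
  { split.
    - apply rs_nonneg. intros; apply Ht.
    - apply Rle_trans with (rs (Kn n) (fun j => g (K + j)%nat)).
      + apply rs_le. intros; apply Ht.
      + rewrite Series_tail by auto. apply rs_le_Series.
        * intros; pose proof (Ht (K + k)%nat 0%nat); lra.
        * apply (proj1 (ex_series_incr_n g K)); auto. }
  apply Rabs_lt_between in HN1. apply Rabs_lt_between.
  unfold e3 in *. destruct eps; simpl in *. lra.
Qed.

Definition ee (k : nat) : R := / ((INR k + 1) * sqrt (INR k + 1)).

Lemma ee_sum N : rs (Datatypes.S N) ee <= 3 - 2 / sqrt (INR N + 1).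
Proof.
  induction N.
  - cbn [rs]. unfold ee. replace (INR 0 + 1) with 1 by (simpl; ring). rewrite sqrt_1. lra.
  - assert (E : rs (Datatypes.S (Datatypes.S N)) ee = rs (Datatypes.S N) ee + ee (Datatypes.S N)) by reflexivity.
    rewrite E. set (X := rs (Datatypes.S N) ee) in *.
    unfold ee. rewrite S_INR.
    set (x := INR N + 1). assert (Hx : 1 <= x) by (unfold x; pose proof (pos_INR N); lra).
    set (a := sqrt x). set (b := sqrt (x + 1)).
    assert (Ha : 1 <= a) by (unfold a; rewrite <- sqrt_1; apply sqrt_le_1_alt; lra).
    assert (Hab : a <= b) by (unfold a, b; apply sqrt_le_1_alt; lra).
    assert (Haa : a * a = x) by (apply sqrt_sqrt; lra).
    assert (Hbb : b * b = x + 1) by (apply sqrt_sqrt; lra).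
    assert (Hstep : / ((x + 1) * b) <= 2 / a - 2 / b).
    { rewrite <- Hbb. assert (Hb0 : 0 < b) by lra.
      assert (Hp : 0 < a * (b * b * b)) by (repeat apply Rmult_lt_0_compat; lra).
      apply Rmult_le_reg_r with (a * (b * b * b)); [exact Hp|].
      replace (/ (b * b * b) * (a * (b * b * b))) with a by (field; lra).
      replace ((2 / a - 2 / b) * (a * (b * b * b))) with (2 * b * b * b - 2 * a * b * b) by (field; lra).
      assert ((b - a) * (b + a) = 1) by nra.
      assert (0 <= (b - a) * (2 * b * b - a * a - a * b)) by (apply Rmult_le_pos; nra).
      nra. }
    fold x in IHN. fold a in IHN. lra.
Qed.

Lemma L_ge1 j : 1 <= INR (L j).
Proof. destruct (L_spec j) as [H _]. apply (le_INR 1) in H. simpl in H. auto. Qed.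

Lemma rs_ee_le3 N : rs N ee <= 3.
Proof.
  destruct N; [cbn [rs]; lra|]. pose proof (ee_sum N).
  assert (0 < 2 / sqrt (INR N + 1)).
  { apply Rdiv_lt_0_compat; [lra|]. apply sqrt_lt_R0. pose proof (pos_INR N); lra. }
  lra.
Qed.

Lemma ee_pos k : 0 <= ee k.
Proof. unfold ee. apply Rinv_nonneg. pose proof (pos_INR k). apply Rmult_le_pos; [lra|apply sqrt_pos]. Qed.

Lemma g_le_ee K0 k : 0 <= K0 -> K0 / sqrt (INR (L (k+2))) <= K0 * sqrt 8 * ee k.
Proof.
  intros HK. pose proof (L_lower k) as HL. rewrite plus_INR in HL. simpl (INR 1) in HL.
  set (y := INR k + 1) in *. assert (Hy : 1 <= y) by (unfold y; pose proof (pos_INR k); lra).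
  pose proof (L_ge1 (k+2)) as HL1. set (l := INR (L (k+2))) in *.
  assert (Hs : y * sqrt y <= sqrt 8 * sqrt l).
  { rewrite <- sqrt_mult by lra. rewrite <- (sqrt_square y) at 1 by lra. rewrite <- sqrt_mult by nra.
    apply sqrt_le_1_alt. simpl in HL. nra. }
  assert (Hsy : 1 <= sqrt y) by (rewrite <- sqrt_1; apply sqrt_le_1_alt; lra).
  assert (Hsl : 0 < sqrt l) by (apply sqrt_lt_R0; lra).
  unfold ee. fold y. unfold Rdiv.
  rewrite Rmult_assoc. apply Rmult_le_compat_l; auto.
  apply Rmult_le_reg_r with (sqrt l * (y * sqrt y)). { apply Rmult_lt_0_compat; nra. }
  replace (/ sqrt l * (sqrt l * (y * sqrt y))) with (y * sqrt y) by (field; lra).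
  replace (sqrt 8 * / (y * sqrt y) * (sqrt l * (y * sqrt y))) with (sqrt 8 * sqrt l) by (field; nra).
  auto.
Qed.

Theorem corollary4p5 (S : list Z) (HS_nodup : NoDup S)
  (HS_sym : symmetric S) (HS_gen : generates_Z S) :
  let a := fun k : nat => / INR (indexZ (Lambda (k + 2)%nat)) in
  ex_series a /\
  is_lim_seq (fun n : nat => walk_expect S n (fun x => INR (DZ x)) 0%Z)
             (2 + Series a).
Proof.
  intros a.
  assert (Hne : S <> nil).
  { intros ->. destruct (HS_gen 1%Z) as [c Hc]. simpl in Hc. discriminate. }
  destruct (q_bound S HS_nodup HS_sym Hne HS_gen) as [K0 [HK0 Hqb]].
  set (g := fun k => K0 / sqrt (INR (L (k+2)))).
  assert (Hg0 : forall k, 0 <= g k).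
  { intros k. unfold g. apply Rmult_le_pos; [lra|]. apply Rinv_nonneg, sqrt_pos. }
  assert (Hge : ex_series g).
  { apply ex_series_bounded with (K0 * sqrt 8 * 3); auto. intros N.
    apply Rle_trans with (rs N (fun k => K0 * sqrt 8 * ee k)).
    - apply rs_le. intros k _. apply g_le_ee. lra.
    - rewrite rs_scal. apply Rmult_le_compat_l. pose proof (sqrt_pos 8). nra. apply rs_ee_le3. }
  assert (Hag : forall k, 0 <= a k <= g k).
  { intros k. unfold a, g. fold (L (k+2)). pose proof (L_ge1 (k+2)). set (l := INR (L (k+2))) in *.
    assert (Hs1 : 1 <= sqrt l) by (rewrite <- sqrt_1; apply sqrt_le_1_alt; lra).
    assert (Hsl : sqrt l <= l).
    { rewrite <- (sqrt_square l) at 2 by lra. apply sqrt_le_1_alt. nra. }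
    split. { apply Rinv_nonneg; lra. }
    unfold Rdiv. apply Rle_trans with (/ sqrt l).
    - apply Rinv_le_contravar; lra.
    - pose proof (Rinv_nonneg (sqrt l) ltac:(lra)). nra. }
  split.
  { apply (ex_series_le a g); auto. intros k. rewrite <- Rabs_Rabsolu; apply Rabs_le.
    pose proof (Hag k). rewrite Rabs_pos_eq; lra. }
  set (p := fun n => walk_expect S n (fun x => ind (x = 0%Z)) 0%Z).
  set (t := fun k n => walk_expect S n (fun x => ind (x <> 0%Z /\ Lambda (k+2) x)) 0%Z).
  assert (Htq : forall k n, t k n = walk_expect S n (fun x => ind (in_kZ (L (k+2)) x)) 0%Z - p n).
  { intros k n. unfold t, p. rewrite <- walk_sub. apply walk_ext. intros x.
    destruct (Z.eq_dec x 0) as [->|e].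
    - rewrite ind_F by tauto. rewrite !ind_T; auto. ring. apply Z.divide_0_r.
    - rewrite (ind_F (x = 0%Z)) by auto. unfold ind.
      destruct (excluded_middle_informative (x <> 0%Z /\ Lambda (k + 2) x)) as [h|h];
      destruct (excluded_middle_informative (in_kZ (L (k + 2)) x)) as [h'|h']; try ring.
      + exfalso. apply h'. apply Lambda_iff. tauto.
      + exfalso. apply h. split; auto. apply Lambda_iff. auto. }
  assert (Hp0 : is_lim_seq p 0) by (apply p0_lim; auto).
  assert (Htl : forall k, is_lim_seq (fun n => t k n) (a k)).
  { intros k. apply is_lim_seq_ext with (fun n => walk_expect S n (fun x => ind (in_kZ (L (k+2)) x)) 0%Z - p n).
    { intros n. rewrite Htq. auto. }
    replace (a k) with (/ INR (L (k+2)) - 0) by (unfold a; fold (L (k+2)); ring).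
    apply is_lim_seq_minus'; auto. apply q_lim; auto. destruct (L_spec (k+2)); auto. }
  assert (Htb : forall k n, 0 <= t k n <= g k).
  { intros k n. split.
    - unfold t. apply walk_nonneg; auto. intros; apply ind_01.
    - destruct (Rle_dec (INR (L (k+2))) (INR n * IZR (Mz S))) as [h|h].
      + rewrite Htq. assert (0 <= p n) by (unfold p; apply walk_nonneg; auto; intros; apply ind_01).
        pose proof (Hqb n (L (k+2)) (proj1 (L_spec (k+2))) h). unfold g. lra.
      + unfold t. rewrite (walk_local S n _ (fun _ => 0)).
        * rewrite walk_const by auto. auto.
        * intros x Hx. apply ind_F. intros [Hx0 HL]. apply Lambda_iff in HL.
          apply h. destruct HL as [z Hz].
          assert (Hz0 : z <> 0%Z) by (intro; subst; lia).
          assert (Habs : (Z.of_nat (L (k+2)) <= Z.abs x)%Z).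
          { rewrite Hz, Z.abs_mul. pose proof (Nat2Z.is_nonneg (L (k+2))). rewrite (Z.abs_eq (Z.of_nat _)) by lia. nia. }
          rewrite Z.sub_0_r in Hx.
          assert (HH : (Z.of_nat (L (k+2)) <= Z.of_nat n * Mz S)%Z) by lia.
          apply IZR_le in HH. rewrite mult_IZR, <- !INR_IZR_INZ in HH. lra. }
  set (Kn := fun n : nat => Z.to_nat (Z.of_nat n * Mz S)).
  assert (HE : forall n K, (Kn n <= K)%nat ->
     walk_expect S n (fun x => INR (DZ x)) 0%Z = 2 * (1 - p n) + rs K (fun k => t k n)).
  { intros n K HK.
    rewrite (walk_local S n _ (fun x => 2 * ind (x <> 0%Z) + rs K (fun k => ind (x <> 0%Z /\ Lambda (k+2) x)))).
    - rewrite walk_add, walk_scal, walk_rs by auto. f_equal. f_equal.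
      unfold p. rewrite <- (walk_const S n 1 0%Z Hne) at 1. rewrite <- walk_sub. apply walk_ext.
      intros x. destruct (Z.eq_dec x 0) as [->|e].
      + rewrite ind_F by tauto. rewrite ind_T; auto. ring.
      + rewrite ind_T by auto. rewrite ind_F by auto. ring.
    - intros x Hx. apply D_decomp. unfold Kn in HK. pose proof (Mz_nonneg S). lia. }
  apply is_lim_seq_ext with (fun n => 2 * (1 - p n) + rs (Kn n) (fun k => t k n)).
  { intros n. rewrite (HE n (Kn n)); auto. }
  replace (2 + Series a) with (2 * (1 - 0) + Series a) by ring.
  apply is_lim_seq_plus'.
  - apply (is_lim_seq_scal_l _ 2 (Finite (1 - 0))). apply is_lim_seq_minus'; auto. apply is_lim_seq_const.
  - apply (tannery t a g _ Kn); auto.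
    intros n K HK. pose proof (HE n K HK). pose proof (HE n (Kn n) (le_n _)). simpl. lra.
Qed.
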